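(* Let $R$ be a (unital, not necessarily associative) ring, let $\sigma\colon R\to R$ be an additive surjection with $\sigma(1)=1$, and let $\delta\colon R\to R$ be an additive map with $\delta(1)=0$. Then for every $n\in\mathbb{N}$, in the non-associative Ore extension $R[X;\sigma,\delta]$ one has $\sum_{i=0}^n X^iR=\sum_{i=0}^n RX^i$, as right $R$-modules (in particular as subsets of $R[X;\sigma,\delta]$).
   Context: $\mathbb{N}$ includes $0$. For a non-associative ring $R$ and additive maps $\sigma,\delta\colon R\to R$ with $\sigma(1)=1$, $\delta(1)=0$, the non-associative Ore extension $R[X;\sigma,\delta]$ is the additive group of formal sums $\sum_{i\in\mathbb{N}} r_iX^i$ ($r_i\in R$, finitely many non-zero) with pointwise addition and multiplication the biadditive extension of $(rX^m)(sX^n)=\sum_{i\in\mathbb{N}}(r\pi_i^m(s))X^{i+n}$ for $r,s\in R$, $m,n\in\mathbb{N}$, where $\pi_i^m$ is the sum of all $\binom{m}{i}$ compositions of $i$ copies of $\sigma$ and $m-i$ copies of $\delta$, and $\pi_i^m=0$ if $i>m$. $R$ is identified with $RX^0$; $X^iR$ denotes $\{X^i r: r\in R\}$ and $RX^i=\{rX^i:r\in R\}$, sums of such sets are sets of sums. *)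

(* Defs.v *)
From HB Require Import structures.
From mathcomp Require Import all_boot all_algebra.
Set Implicit Arguments. Unset Strict Implicit. Unset Printing Implicit Defensive.
Import GRing.Theory.
Local Open Scope ring_scope.

Record naring := NARing {
  nar_car :> zmodType;
  nar_mul : nar_car -> nar_car -> nar_car;
  nar_one : nar_car;
  nar_mulDl : forall x y z, nar_mul (x + y) z = nar_mul x z + nar_mul y z;
  nar_mulDr : forall x y z, nar_mul x (y + z) = nar_mul x y + nar_mul x z;
  nar_mul1r : forall x, nar_mul nar_one x = x;
  nar_mulr1 : forall x, nar_mul x nar_one = x
}.

Section Ore.
Variables (R : naring) (sigma delta : R -> R).

Definition word_comp (w : seq bool) : R -> R :=
  foldr (fun (b : bool) f => (if b then sigma else delta) \o f) id w.

(* pi_i^m : sum of all compositions of i copies of sigma and m-i copies of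
   delta (an empty sum, i.e. 0, when i > m) *)
Definition pi_ore (m i : nat) (x : R) : R :=
  \sum_(w : m.-tuple bool | count id w == i) word_comp w x.

(* Elements of R[X;sigma,delta] are given by coefficient sequences
   [:: r_0; ...; r_k] (meaning sum r_j X^j); they are compared through their
   coefficient functions nat -> R (so trailing zeros are irrelevant). *)
Definition coef (p : seq R) : nat -> R := fun k => nth 0 p k.

Definition monom (r : R) (i : nat) : seq R := rcons (nseq i 0) r.

(* coefficient function of the product p * q in R[X;sigma,delta]: the
   biadditive extension of (r X^m)(s X^n) = sum_i (r pi_i^m(s)) X^(i+n) *)
Definition ore_mul (p q : seq R) : nat -> R := fun k =>
  \sum_(m < size p) \sum_(n < size q) \sum_(i < m.+1 | (i + n)%N == k)
     nar_mul (nth 0 p m) (pi_ore m i (nth 0 q n)).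

Definition sum_XiR (n : nat) : (nat -> R) -> Prop := fun f =>
  exists r : 'I_n.+1 -> R,
    f = (fun k => \sum_(i < n.+1) ore_mul (monom (nar_one R) i) (monom (r i) 0) k).

Definition sum_RXi (n : nat) : (nat -> R) -> Prop := fun f =>
  exists r : 'I_n.+1 -> R,
    f = (fun k => \sum_(i < n.+1) coef (monom (r i) i) k).

End Ore.

(* Main.v *)
Require Import Defs.
From mathcomp Require Import all_boot all_algebra.
From Stdlib Require Import FunctionalExtensionality PropExtensionality.
Local Open Scope ring_scope.
Import GRing.Theory.

Section Aux.
Variables (R : naring) (sigma delta : R -> R).
Hypothesis sigma_surj : forall y : R, exists x : R, sigma x = y.

Lemma mul0_nar (x : R) : nar_mul 0 x = 0.
Proof.
have h := nar_mulDl 0 0 x; rewrite addr0 in h.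
by apply: (@addrI _ (nar_mul 0 x)); rewrite -h addr0.
Qed.

Lemma word_nseq m (x : R) : word_comp sigma delta (nseq m true) x = iter m sigma x.
Proof. by elim: m => //= m IH; rewrite -IH. Qed.

Lemma pi_diag m (x : R) : pi_ore sigma delta m m x = iter m sigma x.
Proof.
rewrite /pi_ore (big_pred1 (nseq_tuple m true)) /=; first exact: word_nseq.
move=> w /=; apply/idP/idP.
  move=> hc; have : all id w by rewrite all_count size_tuple.
  move=> ha; apply/eqP; apply: val_inj => /=.
  have : all (pred1 true) w by apply: sub_all ha => b /= ->.
  by move/all_pred1P => ->; rewrite size_tuple.
move/eqP => ->; by rewrite /= count_nseq /= mul1n.
Qed.

Lemma iter_surj m (y : R) : exists x, iter m sigma x = y.
Proof.
elim: m y => [|m IH] y; first by exists y.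
have [z <-] := sigma_surj y; have [x <-] := IH z; by exists x.
Qed.

Lemma ore_monom i (r : R) k :
  ore_mul sigma delta (monom (nar_one R) i) (monom r 0) k =
  if (k <= i)%N then pi_ore sigma delta i k r else 0.
Proof.
rewrite /ore_mul /monom size_rcons size_nseq /= big_ord_recr /=.
rewrite big1; last first.
  move=> m _; rewrite big_ord1 /=.
  rewrite nth_rcons size_nseq ltn_ord nth_nseq ltn_ord.
  by rewrite big1 // => j _; rewrite mul0_nar.

rewrite big_ord1 /= nth_rcons size_nseq ltnn eqxx.
under eq_bigl do rewrite addn0.
under eq_bigr do rewrite nar_mul1r.
rewrite (big_ord1_eq _ (fun j => pi_ore sigma delta i j r) k i.+1).
by rewrite ltnS; apply: add0r.
Qed.

Lemma coef_sum n (s : 'I_n.+1 -> R) k :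
  \sum_(i < n.+1) coef (monom (s i) i) k = if (k < n.+1)%N then s (inord k) else 0.
Proof.
have e : forall (i : 'I_n.+1), coef (monom (s i) i) k =
    (if (val i == k) then s (inord k) else 0).
  move=> i; rewrite /coef /monom nth_rcons size_nseq nth_nseq.
  case: (ltngtP k i) => hk; rewrite ?if_same //.
  by rewrite hk; congr s; apply: val_inj; rewrite /= inordK.

under eq_bigr do rewrite e.
rewrite -big_mkcond; exact: (big_ord1_eq _ (fun _ => s (inord k)) k n.+1).
Qed.

Lemma solve n (t : nat -> R) : exists r : nat -> R, forall k, (k < n)%N ->
  \sum_(i < n) (if (k <= i)%N then pi_ore sigma delta i k (r i) else 0) = t k.
Proof.
elim: n t => [|n IH] t; first by exists (fun _ => 0).
have [x hx] := iter_surj n (t n).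
have [r' hr'] := IH (fun k => t k - pi_ore sigma delta n k x).
exists (fun i => if i == n then x else r' i) => k hk.
rewrite big_ord_recr /= eqxx.
under eq_bigr => i _ do rewrite (ltn_eqF (ltn_ord i)).
rewrite ltnS in hk; rewrite hk.
case: (ltnP k n) => hkn.
  by rewrite hr' // subrK.
have -> : k = n by apply/eqP; rewrite eqn_leq hk hkn.
rewrite big1 ?add0r; first by rewrite pi_diag.
by move=> i _; rewrite leqNgt ltn_ord.
Qed.

End Aux.

Theorem lemma12 (R : naring) (sigma delta : R -> R)
  (sigma_add : forall x y : R, sigma (x + y) = sigma x + sigma y)
  (sigma_surj : forall y : R, exists x : R, sigma x = y)
  (sigma1 : sigma (nar_one R) = nar_one R)
  (delta_add : forall x y : R, delta (x + y) = delta x + delta y)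
  (delta1 : delta (nar_one R) = 0) :
  forall n : nat, sum_XiR sigma delta n = sum_RXi n.
Proof.
move=> n; apply: functional_extensionality => f.
apply: propositional_extensionality; split.
  case=> r ->.
  exists (fun k : 'I_n.+1 => \sum_(i < n.+1)
     (if (val k <= i)%N then pi_ore sigma delta i k (r i) else 0)).
  apply: functional_extensionality => k; rewrite coef_sum.
  under eq_bigr do rewrite ore_monom.
  case: ifP => hk; first by apply: eq_bigr => i _; rewrite /= inordK.
  apply: big1 => i _; have hik : (i < k)%N by apply: (leq_trans (ltn_ord i)); rewrite leqNgt hk.
  by rewrite leqNgt hik.
case=> s ->.
have [r hr] := @solve R sigma delta sigma_surj n.+1 (fun k => if (k < n.+1)%N then s (inord k) else 0).
exists (fun i => r i); apply: functional_extensionality => k; rewrite coef_sum.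
under eq_bigr do rewrite ore_monom.
case: (ltnP k n.+1) => hk; first by rewrite hr // hk.
by rewrite big1 // => i _; rewrite leqNgt (leq_trans (ltn_ord i)).
Qed.
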